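(* Let $K=\mathrm{SU}(2)$, $\mathcal{M}=\{(g_1,h_1,g_2,h_2)\in K^4:[g_1,h_1][g_2,h_2]=I\}/K$, and set $P_1=\{[a;b;b;a]: a,b\in K,\ [a,b]=I\}$ and $P_2=\{[a;b;b^{-1};a^{-1}]: a,b\in K,\ [a,b]=I\}$. For a commuting pair $(g,h)\in K^2$ let $$I_{(g,h)}=\{[g;h;khk^{-1};kgk^{-1}] : k\in K,\ k^2=-I\}\subset\mathcal{M}.$$ (1) If $(g,h)\notin\{(\pm I,\pm I)\}$, then $I_{(g,h)}\cong S^2/S^1$ is a closed interval: there is a homeomorphism $\mathfrak{I}_{(g,h)}:[0,1]\to I_{(g,h)}$ with $\mathfrak{I}_{(g,h)}(0)\in P_1$ (namely $[g;h;h;g]$), $\mathfrak{I}_{(g,h)}(1)\in P_2$ (namely $[g;h;h^{-1};g^{-1}]$), and $\mathfrak{I}_{(g,h)}(t)\notin P_1\cup P_2$ for all $t\in(0,1)$. (2) If $(g,h)=(\pm I,\pm I)$, then $I_{(g,h)}$ is a single point, one of $[I;I;I;I]$, $[I;-I;-I;I]$, $[-I;I;I;-I]$, $[-I;-I;-I;-I]$.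
   Context: $[a,b]=aba^{-1}b^{-1}$; $K$ acts by simultaneous conjugation and $[g_1;h_1;g_2;h_2]$ denotes a class in $\mathcal{M}$ (quotient topology). $P_1$ is the boundary surface of the ''Goldman pillow'' $\{[a;b;b;a]\}$ and $P_2$ the boundary surface of the second pillow $\{[a;b;kbk^{-1};kak^{-1}]: k^2=-I, [a,b]\text{ commutes with }k\}$ appearing in the fixed set of the involution $[g_1;h_1;g_2;h_2]\mapsto[h_2;g_2;h_1;g_1]$. *)

(* Defs.v *)
From HB Require Import structures.
From mathcomp Require Import all_boot all_order all_algebra.
From mathcomp Require Import all_classical all_reals all_analysis.
From mathcomp Require Import generic_quotient.
Set Implicit Arguments. Unset Strict Implicit. Unset Printing Implicit Defensive.
Import Order.TTheory GRing.Theory Num.Theory.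
Import numFieldTopology.Exports.
Local Open Scope classical_set_scope.
Local Open Scope ring_scope.
Local Open Scope quotient_scope.

Section SU2.
Variable R : realType.

(* A complex 2x2 matrix A + iB is encoded by the pair (A, B) of real
   2x2 matrices; the topology is the product of the matrix topologies,
   i.e. the usual topology of M_2(C) = R^8. *)
Definition cmx := ('M[R]_2 * 'M[R]_2)%type.

Definition cmul (u v : cmx) : cmx :=
  (u.1 *m v.1 - u.2 *m v.2, u.1 *m v.2 + u.2 *m v.1).
Definition cadj (u : cmx) : cmx := (u.1^T, - u.2^T).
Definition cone : cmx := (1%:M, 0).
Definition cmone : cmx := (- 1%:M, 0).

Definition zmul (z w : R * R) : R * R := (z.1 * w.1 - z.2 * w.2, z.1 * w.2 + z.2 * w.1).
Definition zsub (z w : R * R) : R * R := (z.1 - w.1, z.2 - w.2).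
Definition cdet (u : cmx) : R * R :=
  let z i j := (u.1 i j, u.2 i j) in
  zsub (zmul (z 0 0) (z 1 1)) (zmul (z 0 1) (z 1 0)).

Definition SU2 (u : cmx) : Prop := cmul u (cadj u) = cone /\ cdet u = (1, 0).

(* inverse in SU(2) is the conjugate transpose *)
Definition cinv (u : cmx) : cmx := cadj u.
Definition ccomm (a b : cmx) : cmx := cmul (cmul (cmul a b) (cinv a)) (cinv b).
Definition cconj (k x : cmx) : cmx := cmul (cmul k x) (cinv k).

Definition X4 := (cmx * cmx * cmx * cmx)%type.
Definition quad (g1 h1 g2 h2 : cmx) : X4 := (g1, h1, g2, h2).

Definition conj4 (k : cmx) (x : X4) : X4 :=
  let: (g1, h1, g2, h2) := x in
  (cconj k g1, cconj k h1, cconj k g2, cconj k h2).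

Definition Hom : set X4 := fun x =>
  let: (g1, h1, g2, h2) := x in
  [/\ SU2 g1, SU2 h1, SU2 g2, SU2 h2 &
      cmul (ccomm g1 h1) (ccomm g2 h2) = cone].

Definition HomT := set_type Hom.

Definition orbit (x : X4) : set X4 := [set y | exists k, SU2 k /\ y = conj4 k x].

Definition orb_rel : rel HomT := fun x y => `[< orbit (val x) = orbit (val y) >].

Lemma orb_rel_refl : reflexive orb_rel.
Proof. by move=> x; apply/asboolP. Qed.
Lemma orb_rel_sym : symmetric orb_rel.
Proof. by move=> x y; apply/idP/idP => /asboolP H; apply/asboolP. Qed.
Lemma orb_rel_trans : transitive orb_rel.
Proof. by move=> y x z /asboolP H1 /asboolP H2; apply/asboolP; rewrite H1. Qed.

Canonical orb_equiv := EquivRel orb_rel orb_rel_refl orb_rel_sym orb_rel_trans.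

Definition M := quotient_topology {eq_quot orb_equiv}.

Definition piM (x : HomT) : M := \pi_({eq_quot orb_equiv}) x.

(* [x] = m : the class in M of the quadruple x (x must lie in Hom) *)
Definition is_class (m : M) (x : X4) : Prop :=
  exists p : HomT, val p = x /\ m = piM p.

Definition P1 : set M := [set m | exists a b, [/\ SU2 a, SU2 b, ccomm a b = cone &
  is_class m (quad a b b a)]].
Definition P2 : set M := [set m | exists a b, [/\ SU2 a, SU2 b, ccomm a b = cone &
  is_class m (quad a b (cinv b) (cinv a))]].

Definition Iset (g h : cmx) : set M := [set m | exists k, [/\ SU2 k, cmul k k = cmone &
  is_class m (quad g h (cconj k h) (cconj k g))]].

End SU2.

Definition homeo_from_unit {R : realType} {Y : topologicalType} (f : R -> Y) (S : set Y) : Prop :=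
  [/\ {within `[0, 1], continuous f},
      {in `[0, 1] &, injective f},
      f @` `[0, 1] = S &
      forall U : set R, open U ->
        exists V : set Y, open V /\ f @` (U `&` `[0, 1]) = V `&` S].

(* Main.v *)
Require Import Defs.
From HB Require Import structures.
From mathcomp Require Import all_boot all_order all_algebra.
From mathcomp Require Import all_classical all_reals all_analysis.
From mathcomp Require Import generic_quotient ring lra.
Import Order.TTheory GRing.Theory Num.Theory.
Import numFieldTopology.Exports.
Local Open Scope classical_set_scope.
Local Open Scope ring_scope.
Set Implicit Arguments. Unset Strict Implicit. Unset Printing Implicit Defensive.
Section Quat.
Variable R : realType.

Definition mx2 (a b c d : R) : 'M[R]_2 :=
  \matrix_(i < 2, j < 2) (if (i : nat) == 0%N then (if (j : nat) == 0%N then a else b)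
                          else (if (j : nat) == 0%N then c else d)).

Lemma mx2_eta (A : 'M[R]_2) : A = mx2 (A 0 0) (A 0 1) (A 1 0) (A 1 1).
Proof.
apply/matrixP => i j; rewrite mxE.
case: i => [[|[|i]] Hi] //; case: j => [[|[|j]] Hj] //=;
by congr (A _ _); apply/val_inj.
Qed.

Lemma mx2E00 a b c d : mx2 a b c d 0 0 = a. Proof. by rewrite !mxE. Qed.
Lemma mx2E01 a b c d : mx2 a b c d 0 1 = b. Proof. by rewrite !mxE. Qed.
Lemma mx2E10 a b c d : mx2 a b c d 1 0 = c. Proof. by rewrite !mxE. Qed.
Lemma mx2E11 a b c d : mx2 a b c d 1 1 = d. Proof. by rewrite !mxE. Qed.
Definition mx2E := (mx2E00, mx2E01, mx2E10, mx2E11).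

Lemma mx2_mul a b c d a' b' c' d' :
  mx2 a b c d *m mx2 a' b' c' d' =
  mx2 (a * a' + b * c') (a * b' + b * d') (c * a' + d * c') (c * b' + d * d').
Proof.
apply/matrixP => i j; rewrite !mxE !big_ord_recr big_ord0 /= !mxE add0r.
by case: i => [[|[|i]] Hi] //; case: j => [[|[|j]] Hj].
Qed.

Lemma mx2_add a b c d a' b' c' d' :
  mx2 a b c d + mx2 a' b' c' d' = mx2 (a + a') (b + b') (c + c') (d + d').
Proof.
apply/matrixP => i j; rewrite !mxE.
by case: i => [[|[|i]] Hi] //; case: j => [[|[|j]] Hj].
Qed.

Lemma mx2_opp a b c d : - mx2 a b c d = mx2 (- a) (- b) (- c) (- d).
Proof.
apply/matrixP => i j; rewrite !mxE.
by case: i => [[|[|i]] Hi] //; case: j => [[|[|j]] Hj].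
Qed.

Lemma mx2_tr a b c d : (mx2 a b c d)^T = mx2 a c b d.
Proof.
apply/matrixP => i j; rewrite !mxE.
by case: i => [[|[|i]] Hi] //; case: j => [[|[|j]] Hj].
Qed.

Lemma mx2_1 : (1%:M : 'M[R]_2) = mx2 1 0 0 1.
Proof.
apply/matrixP => i j; rewrite !mxE.
by case: i => [[|[|i]] Hi] //; case: j => [[|[|j]] Hj].
Qed.

Lemma mx2_0 : (0 : 'M[R]_2) = mx2 0 0 0 0.
Proof.
apply/matrixP => i j; rewrite !mxE.
by case: i => [[|[|i]] Hi] //; case: j => [[|[|j]] Hj].
Qed.

Lemma mx2_inj a b c d a' b' c' d' :
  mx2 a b c d = mx2 a' b' c' d' -> [/\ a = a', b = b', c = c' & d = d'].
Proof.
move=> E; have := congr1 (fun A : 'M[R]_2 => (A 0 0, A 0 1, A 1 0, A 1 1)) E.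
by rewrite !mxE /= => -[-> -> -> ->].
Qed.

Record quat := Qt { q0 : R; q1 : R; q2 : R; q3 : R }.

Lemma quat_eq (x y : quat) : q0 x = q0 y -> q1 x = q1 y -> q2 x = q2 y -> q3 x = q3 y -> x = y.
Proof. by case: x; case: y => /= ? ? ? ? ? ? ? ? -> -> -> ->. Qed.

Definition qmul (x y : quat) : quat :=
  Qt (q0 x * q0 y - q1 x * q1 y - q2 x * q2 y - q3 x * q3 y)
     (q0 x * q1 y + q1 x * q0 y - q2 x * q3 y + q3 x * q2 y)
     (q0 x * q2 y + q2 x * q0 y + q1 x * q3 y - q3 x * q1 y)
     (q0 x * q3 y + q3 x * q0 y + q2 x * q1 y - q1 x * q2 y).
Definition qconj (x : quat) : quat := Qt (q0 x) (- q1 x) (- q2 x) (- q3 x).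
Definition qnorm (x : quat) : R := q0 x ^+ 2 + q1 x ^+ 2 + q2 x ^+ 2 + q3 x ^+ 2.
Definition qsc (a : R) : quat := Qt a 0 0 0.
Definition qscale (a : R) (x : quat) : quat := Qt (a * q0 x) (a * q1 x) (a * q2 x) (a * q3 x).
Definition qcj (k x : quat) : quat := qmul (qmul k x) (qconj k).

Definition mkQ (x : quat) : cmx R :=
  (mx2 (q0 x) (- q2 x) (q2 x) (q0 x), mx2 (q1 x) (q3 x) (q3 x) (- q1 x)).

Ltac qring := apply: quat_eq; rewrite /= ?expr2; ring.

Lemma qmulA x y z : qmul x (qmul y z) = qmul (qmul x y) z.
Proof. qring. Qed.
Lemma qmul1 x : qmul x (qsc 1) = x.
Proof. qring. Qed.
Lemma qmul1l x : qmul (qsc 1) x = x.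
Proof. qring. Qed.
Lemma qconj_mul x y : qconj (qmul x y) = qmul (qconj y) (qconj x).
Proof. qring. Qed.
Lemma qconjK x : qconj (qconj x) = x.
Proof. qring. Qed.
Lemma qmul_conjr x : qmul x (qconj x) = qsc (qnorm x).
Proof. rewrite /qnorm; qring. Qed.
Lemma qmul_conjl x : qmul (qconj x) x = qsc (qnorm x).
Proof. rewrite /qnorm; qring. Qed.
Lemma qmul_sc a x : qmul (qsc a) x = qscale a x.
Proof. qring. Qed.
Lemma qmul_scr a x : qmul x (qsc a) = qscale a x.
Proof. qring. Qed.
Lemma qscale1 x : qscale 1 x = x.
Proof. qring. Qed.

Lemma mkQ_mul x y : cmul (mkQ x) (mkQ y) = mkQ (qmul x y).
Proof.
rewrite /cmul /mkQ /= !mx2_mul !mx2_opp !mx2_add.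
by congr (_, _); congr mx2; ring.
Qed.

Lemma mkQ_adj x : cadj (mkQ x) = mkQ (qconj x).
Proof.
rewrite /cadj /mkQ /= !mx2_tr !mx2_opp.
by congr (_, _); congr mx2; rewrite ?opprK.
Qed.

Lemma mkQ_det x : cdet (mkQ x) = (qnorm x, 0).
Proof.
rewrite /cdet /mkQ /zsub /zmul /= !mxE /= /qnorm.
congr (_, _); rewrite ?expr2; ring.
Qed.

Lemma mkQ_inj x y : mkQ x = mkQ y -> x = y.
Proof.
rewrite /mkQ => -[/mx2_inj [E0 _ E2 _] /mx2_inj [E1 _ E3 _]].
by apply: quat_eq.
Qed.

Lemma mkQ_one : cone R = mkQ (qsc 1).
Proof. by rewrite /cone /mkQ /= mx2_1 mx2_0 !oppr0. Qed.
Lemma mkQ_mone : cmone R = mkQ (qsc (-1)).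
Proof. by rewrite /cmone /mkQ /= mx2_1 mx2_0 mx2_opp !oppr0. Qed.

Lemma SU2_mkQ x : SU2 (mkQ x) <-> qnorm x = 1.
Proof.
rewrite /SU2 mkQ_adj mkQ_mul mkQ_det qmul_conjr mkQ_one; split.
  by case=> _ [].
by move=> ->.
Qed.

End Quat.
Section Form.
Variable R : realType.
Local Notation mx2 := (@mx2 R).
Local Notation mkQ := (@mkQ R).

Lemma su2_key (a00 b00 a01 b01 a10 b10 a11 b11 : R) :
 let H00r := a00^+2 + b00^+2 + a01^+2 + b01^+2 - 1 in
 let H10r := a10*a00 + b10*b00 + a11*a01 + b11*b01 in
 let H10i := b10*a00 - a10*b00 + b11*a01 - a11*b01 in
 let dr := a00*a11 - b00*b11 - (a01*a10 - b01*b10) - 1 in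
 let di := a00*b11 + b00*a11 - (a01*b10 + b01*a10) in
 [/\ a11 - a00 = -( a11*H00r - (a01*H10r - b01*H10i) - (dr*a00 - di*(-b00)) ),
     b11 + b00 = -( b11*H00r - (a01*H10i + b01*H10r) - (dr*(-b00) + di*a00) ),
     a10 + a01 = -a10*H00r + (a00*H10r - b00*H10i) - (dr*a01 - di*(-b01)) &
     b10 - b01 = -b10*H00r + (a00*H10i + b00*H10r) - (dr*(-b01) + di*a01)].
Proof. by rewrite /=; split; rewrite ?expr2; ring. Qed.

Definition ofC (u : cmx R) : quat R := Qt (u.1 0 0) (u.2 0 0) (u.1 1 0) (u.2 1 0).

Lemma SU2_form u : SU2 u -> u = mkQ (ofC u) /\ qnorm (ofC u) = 1.
Proof.
case: u => A B; rewrite /SU2 /cmul /cadj /cone /cdet /zsub /zmul /=.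
rewrite (mx2_eta A) (mx2_eta B).
set a00 := A 0 0; set a01 := A 0 1; set a10 := A 1 0; set a11 := A 1 1.
set b00 := B 0 0; set b01 := B 0 1; set b10 := B 1 0; set b11 := B 1 1.
rewrite !mx2_tr !mx2_opp !mx2_mul !mx2_opp !mx2_add mx2_1 mx2_0 !mx2E.
case=> -[/mx2_inj [E00 _ E10 _] /mx2_inj [_ _ F10 _]] [D1 D2].
have [K1 K2 K3 K4] := su2_key a00 b00 a01 b01 a10 b10 a11 b11.
have h00 : a00^+2 + b00^+2 + a01^+2 + b01^+2 - 1 = 0.
  by rewrite -E00 ?expr2; ring.
have h10r : a10*a00 + b10*b00 + a11*a01 + b11*b01 = 0.
  by rewrite -E10; ring.
have h10i : b10*a00 - a10*b00 + b11*a01 - a11*b01 = 0.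
  by rewrite -F10; ring.
have hdr : a00*a11 - b00*b11 - (a01*a10 - b01*b10) - 1 = 0.
  by rewrite D1 subrr.
have hdi : a00*b11 + b00*a11 - (a01*b10 + b01*a10) = 0 by [].
rewrite h00 h10r h10i hdr hdi in K1 K2 K3 K4.
have e11 : a11 = a00.
  by apply/eqP; rewrite -subr_eq0 K1; apply/eqP; ring.
have f11 : b11 = - b00.
  by apply/eqP; rewrite -subr_eq0 opprK K2; apply/eqP; ring.
have e01 : a01 = - a10.
  by apply/eqP; rewrite -subr_eq0 opprK addrC K3; apply/eqP; ring.
have f01 : b01 = b10.
  by apply/eqP; rewrite -subr_eq0 -oppr_eq0 opprB K4; apply/eqP; ring.
split.
  by rewrite /mkQ /ofC /= !mx2E e11 f11 e01 f01.
rewrite /qnorm /ofC /= !mx2E.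
by apply/eqP; rewrite -subr_eq0 -h00 e01 f01; apply/eqP; rewrite ?expr2; ring.
Qed.

End Form.
Section Group.
Variable R : realType.
Local Notation mkQ := (@mkQ R).
Local Notation quat := (quat R).
Ltac qring := apply: quat_eq; rewrite /= ?expr2; ring.

Definition qcomm (x y : quat) := qmul (qmul (qmul x y) (qconj x)) (qconj y).

Lemma cinv_mkQ (x : quat) : cinv (mkQ x) = mkQ (qconj x).
Proof. exact: mkQ_adj. Qed.
Lemma cconj_mkQ (k x : quat) : cconj (mkQ k) (mkQ x) = mkQ (qcj k x).
Proof. by rewrite /cconj cinv_mkQ !mkQ_mul. Qed.
Lemma ccomm_mkQ (x y : quat) : ccomm (mkQ x) (mkQ y) = mkQ (qcomm x y).
Proof. by rewrite /ccomm !cinv_mkQ !mkQ_mul. Qed.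

Lemma qnorm_mul (x y : quat) : qnorm (qmul x y) = qnorm x * qnorm y.
Proof. rewrite /qnorm /= ?expr2; ring. Qed.
Lemma qnorm_conj (x : quat) : qnorm (qconj x) = qnorm x.
Proof. rewrite /qnorm /= ?expr2; ring. Qed.

Lemma qcj_mul_gen (s x y : quat) : qmul (qcj s x) (qcj s y) = qscale (qnorm s) (qcj s (qmul x y)).
Proof. rewrite /qcj /qnorm; qring. Qed.
Lemma qcj_mul (s x y : quat) : qnorm s = 1 -> qmul (qcj s x) (qcj s y) = qcj s (qmul x y).
Proof. by move=> N; rewrite qcj_mul_gen N qscale1. Qed.
Lemma qconj_qcj (s x : quat) : qconj (qcj s x) = qcj s (qconj x).
Proof. rewrite /qcj; qring. Qed.
Lemma qcj_comp (k s x : quat) : qcj k (qcj s x) = qcj (qmul k s) x.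
Proof. rewrite /qcj; qring. Qed.
Lemma qcj_sc (s : quat) (a : R) : qcj s (qsc a) = qscale (qnorm s) (qsc a).
Proof. rewrite /qcj /qnorm; qring. Qed.
Lemma qcj_1 (s : quat) : qnorm s = 1 -> qcj s (qsc 1) = qsc 1.
Proof. by move=> N; rewrite qcj_sc N qscale1. Qed.
Lemma qcomm_qcj (s x y : quat) : qnorm s = 1 -> qcomm (qcj s x) (qcj s y) = qcj s (qcomm x y).
Proof. by move=> N; rewrite /qcomm !qconj_qcj !qcj_mul. Qed.
Lemma qcj_inv (k s x : quat) : qnorm s = 1 -> qcj (qmul k (qconj s)) (qcj s x) = qcj k x.
Proof.
move=> N; rewrite qcj_comp -qmulA qmul_conjl N.
by rewrite qmul1.
Qed.

Lemma SU2_mul (a b : cmx R) : SU2 a -> SU2 b -> SU2 (cmul a b).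
Proof.
move=> /SU2_form [Ea Na] /SU2_form [Eb Nb].
by rewrite Ea Eb mkQ_mul SU2_mkQ qnorm_mul Na Nb mulr1.
Qed.
Lemma SU2_inv (a : cmx R) : SU2 a -> SU2 (cinv a).
Proof. by move=> /SU2_form [Ea Na]; rewrite Ea cinv_mkQ SU2_mkQ qnorm_conj. Qed.
Lemma SU2_conj (k a : cmx R) : SU2 k -> SU2 a -> SU2 (cconj k a).
Proof. by move=> Hk Ha; rewrite /cconj; apply: SU2_mul; [apply: SU2_mul|apply: SU2_inv]. Qed.

Lemma Hom_quad (a b c d : quat) :
  Defs.Hom (quad (mkQ a) (mkQ b) (mkQ c) (mkQ d)) <->
  [/\ qnorm a = 1, qnorm b = 1, qnorm c = 1, qnorm d = 1 &
      qmul (qcomm a b) (qcomm c d) = qsc 1].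
Proof.
rewrite /Defs.Hom /quad !ccomm_mkQ mkQ_mul mkQ_one; split.
  case=> /SU2_mkQ -> /SU2_mkQ -> /SU2_mkQ -> /SU2_mkQ -> E; split => //.
  exact: mkQ_inj.
by case=> /SU2_mkQ ? /SU2_mkQ ? /SU2_mkQ ? /SU2_mkQ ? ->.
Qed.

End Group.
Section Classes.
Variable R : realType.
Local Notation mkQ := (@mkQ R).
Local Notation quat := (quat R).

Lemma Hom_form (x : X4 R) : Defs.Hom x -> exists a b c d,
  x = quad (mkQ a) (mkQ b) (mkQ c) (mkQ d) /\
  [/\ qnorm a = 1, qnorm b = 1, qnorm c = 1, qnorm d = 1 &
      qmul (qcomm a b) (qcomm c d) = qsc 1].
Proof.
case: x => [[[g1 h1] g2] h2] H; have H' := H.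
case: H => /SU2_form [E1 _] /SU2_form [E2 _] /SU2_form [E3 _] /SU2_form [E4 _] _.
exists (ofC g1), (ofC h1), (ofC g2), (ofC h2).
have Ex : (g1, h1, g2, h2) = quad (mkQ (ofC g1)) (mkQ (ofC h1)) (mkQ (ofC g2)) (mkQ (ofC h2)).
  by rewrite /quad -E1 -E2 -E3 -E4.
by split=> //; apply/Hom_quad; rewrite -Ex.
Qed.

Lemma conj4_quad (k a b c d : quat) :
  conj4 (mkQ k) (quad (mkQ a) (mkQ b) (mkQ c) (mkQ d)) =
  quad (mkQ (qcj k a)) (mkQ (qcj k b)) (mkQ (qcj k c)) (mkQ (qcj k d)).
Proof. by rewrite /conj4 /quad /= !cconj_mkQ. Qed.

Lemma qnorm_qcj (s a : quat) : qnorm s = 1 -> qnorm (qcj s a) = qnorm a.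
Proof. by move=> N; rewrite /qcj !qnorm_mul qnorm_conj N mul1r mulr1. Qed.

Lemma Hom_conj4 (x : X4 R) s : Defs.Hom x -> SU2 s -> Defs.Hom (conj4 s x).
Proof.
move=> /Hom_form [a [b [c [d [-> [Na Nb Nc Nd E]]]]]] /SU2_form [Es Ns].
rewrite Es conj4_quad; apply/Hom_quad; rewrite !qnorm_qcj //; split => //.
by rewrite !qcomm_qcj // qcj_mul // E qcj_1.
Qed.

Lemma orbit_conj4 (x : X4 R) s : Defs.Hom x -> SU2 s -> Defs.orbit (conj4 s x) = Defs.orbit x.
Proof.
move=> Hx Hs; have Hx' := Hx.
move: Hx' => /Hom_form [a [b [c [d [Ex _]]]]].
have [Es Ns] := SU2_form Hs.
rewrite eqEsubset; split => y [k [Hk ->]].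
  exists (cmul k s); split; first exact: SU2_mul.
  have [Ek Nk] := SU2_form Hk.
  by rewrite Ex Ek Es mkQ_mul !conj4_quad !qcj_comp.
exists (cmul k (cinv s)); split; first by apply: SU2_mul => //; exact: SU2_inv.
have [Ek Nk] := SU2_form Hk.
by rewrite Ex Ek Es cinv_mkQ mkQ_mul !conj4_quad !qcj_inv.
Qed.

Lemma orbit_self (x : X4 R) : Defs.Hom x -> Defs.orbit x x.
Proof.
move=> /Hom_form [a [b [c [d [-> _]]]]].
exists (cone R); split; first by rewrite mkQ_one SU2_mkQ /qnorm /=; ring.
rewrite mkQ_one conj4_quad.
have E (q : quat) : qcj (qsc 1) q = q.
  by rewrite /qcj qmul1l; apply: quat_eq => /=; ring.
by rewrite !E.
Qed.

Definition mkHom (x : X4 R) (H : Defs.Hom x) : HomT R := exist _ x (mem_set H).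

Lemma piM_eq (p q : HomT R) : piM p = piM q <-> Defs.orbit (val p) = Defs.orbit (val q).
Proof.
split.
  by move=> /eqquotP /asboolP.
by move=> E; apply/eqquotP; apply/asboolP.
Qed.

Lemma piM_orbit (p q : HomT R) : piM p = piM q -> exists k, SU2 k /\ val p = conj4 k (val q).
Proof.
move=> /piM_eq E.
have : Defs.orbit (val p) (val p).
  apply: orbit_self; case: p {E} => x /= Hx; exact: set_mem.
by rewrite E.
Qed.

Lemma HomT_Hom (p : HomT R) : Defs.Hom (val p).
Proof. by case: p => x /= Hx; exact: set_mem. Qed.

Lemma is_class_conj (m : M R) (x : X4 R) s : Defs.Hom x -> SU2 s ->
  is_class m (conj4 s x) <-> is_class m x.
Proof.
move=> Hx Hs; split => -[p [Ep ->]].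
  exists (mkHom Hx); split => //; apply/piM_eq => /=.
  by rewrite Ep orbit_conj4.
exists (mkHom (Hom_conj4 Hx Hs)); split => //; apply/piM_eq => /=.
by rewrite Ep orbit_conj4.
Qed.

End Classes.
Section Topo.
Variable R : realType.

Lemma cont_fst (T U : topologicalType) : continuous (@fst T U).
Proof. move=> p; exact: cvg_fst. Qed.
Lemma cont_snd (T U : topologicalType) : continuous (@snd T U).
Proof. move=> p; exact: cvg_snd. Qed.

Lemma cont_pair (T U V : topologicalType) (f : T -> U) (g : T -> V) :
  continuous f -> continuous g -> continuous (fun t => (f t, g t)).
Proof. move=> cf cg t; apply: cvg_pair; [exact: cf|exact: cg]. Qed.

Lemma cont_mx2 (T : topologicalType) (f0 f1 f2 f3 : T -> R) :
  continuous f0 -> continuous f1 -> continuous f2 -> continuous f3 ->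
  continuous (fun t => mx2 (f0 t) (f1 t) (f2 t) (f3 t)).
Proof.
move=> c0 c1 c2 c3 t A [P Pnb sPA].
have H : \forall x \near t, forall i : 'I_2, forall j : 'I_2,
   P i j (mx2 (f0 x) (f1 x) (f2 x) (f3 x) i j).
  apply: filter_forall => i; apply: filter_forall => j.
  have := Pnb i j; rewrite !mxE.
  case: i => [[|[|i]] Hi] //; case: j => [[|[|j]] Hj] //= => nb;
  [have := c0 t _ nb | have := c1 t _ nb | have := c2 t _ nb | have := c3 t _ nb];
  apply: (@filterS _ (nbhs t)) => x /=; rewrite mxE //.
by apply: filterS H => x Hx; apply: sPA => i j; exact: Hx.
Qed.

Lemma cont_entry (T : topologicalType) (f : T -> 'M[R]_2) i j :
  continuous f -> continuous (fun t => f t i j).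
Proof.
move=> cf t; apply: (@continuous_comp _ _ _ f (fun M : 'M[R]_2 => M i j)).
  exact: cf.
exact: coord_continuous.
Qed.

Lemma cont_add (T : topologicalType) (f g : T -> R) :
  continuous f -> continuous g -> continuous (fun t => f t + g t).
Proof. move=> cf cg t; exact: (continuousD (cf t) (cg t)). Qed.
Lemma cont_mul (T : topologicalType) (f g : T -> R) :
  continuous f -> continuous g -> continuous (fun t => f t * g t).
Proof. move=> cf cg t; exact: (continuousM (cf t) (cg t)). Qed.
Lemma cont_opp (T : topologicalType) (f : T -> R) :
  continuous f -> continuous (fun t => - f t).
Proof. move=> cf t; exact: (continuousN (cf t)). Qed.
Lemma cont_cst (T : topologicalType) (a : R) : continuous (fun _ : T => a).
Proof. move=> t; exact: cvg_cst. Qed.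
Lemma cont_sqrt (T : topologicalType) (f : T -> R) :
  continuous f -> continuous (fun t => Num.sqrt (f t)).
Proof.
move=> cf t; apply: (@continuous_comp _ _ _ f (@Num.sqrt R)); first exact: cf.
exact: sqrt_continuous.
Qed.

Definition clamp (t : R) : R := Num.min (Num.max t 0) 1.
Lemma cont_clamp : continuous clamp.
Proof.
move=> t; rewrite /clamp.
apply: (@continuous_min R R (fun t => Num.max t 0) (fun _ => 1)); last exact: cvg_cst.
apply: (@continuous_max R R id (fun _ => 0)); last exact: cvg_cst.
exact: cvg_id.
Qed.

End Topo.
Section MainAlg.
Variable R : realType.
Local Notation mkQ := (@mkQ R).
Local Notation quat := (quat R).
Ltac qring := apply: quat_eq; rewrite /= ?expr2; ring.

Lemma qcj_pure (c s x0 x1 : R) :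
  qcj (Qt 0 c s 0) (Qt x0 x1 0 0) =
  Qt (x0 * (c^+2 + s^+2)) (x1 * (c^+2 - s^+2)) (2 * x1 * c * s) 0.
Proof. rewrite /qcj; qring. Qed.

Lemma qcj_rot (p q c r : R) :
  qcj (Qt p q 0 0) (Qt 0 c r 0) =
  Qt 0 (c * (p^+2 + q^+2)) (r * (p^+2 - q^+2)) (- (2 * p * q * r)).
Proof. rewrite /qcj; qring. Qed.

Lemma qcj_diag (p q x0 x1 : R) :
  qcj (Qt p q 0 0) (Qt x0 x1 0 0) = qscale (p^+2 + q^+2) (Qt x0 x1 0 0).
Proof. rewrite /qcj; qring. Qed.

Lemma qcomm_diag (x0 x1 y0 y1 : R) :
  qcomm (Qt x0 x1 0 0) (Qt y0 y1 0 0) = qsc ((x0^+2 + x1^+2) * (y0^+2 + y1^+2)).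
Proof. rewrite /qcomm; qring. Qed.

Lemma q0_qcj (s x : quat) : q0 (qcj s x) = qnorm s * q0 x.
Proof. rewrite /qcj /qnorm /= ?expr2; ring. Qed.

Lemma qcj_scale (e : R) (k x : quat) : qcj (qscale e k) x = qscale (e ^+ 2) (qcj k x).
Proof. rewrite /qcj; qring. Qed.

Lemma qcj_shift (s k k' h : quat) : qnorm s = 1 -> qcj s k = k' ->
  qcj s (qcj k h) = qcj k' (qcj s h).
Proof.
move=> N E; rewrite qcj_comp -E !qcj_comp.
by congr qcj; rewrite /qcj -qmulA qmul_conjl N qmul1.
Qed.

End MainAlg.
Section Clamp.
Variable R : realType.
Lemma clamp_in (t : R) : 0 <= clamp t /\ clamp t <= 1.
Proof.
rewrite /clamp minElt maxElt.
case: (ltP t 0) => h1; case: ltP => h2; split; lra.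
Qed.
Lemma clamp_id (t : R) : 0 <= t -> t <= 1 -> clamp t = t.
Proof.
move=> h h'; rewrite /clamp minElt maxElt.
case: (ltP t 0) => h1; first lra.
by case: ltP => h2 //; lra.
Qed.
End Clamp.
Section Rot.
Variable R : realType.
Local Notation quat := (quat R).

Lemma rot_exists (c r y z : R) : 0 <= r -> r^+2 = y^+2 + z^+2 ->
  exists p q : R, p^+2 + q^+2 = 1 /\ qcj (Qt p q 0 0) (Qt 0 c r 0) = Qt 0 c y z.
Proof.
move=> r0 Hr; rewrite /=.
have [Ery|Nry] := eqVneq (r + y) 0.
  have Ey : y = - r by apply/eqP; rewrite -subr_eq0 opprK addrC Ery.
  have Ez : z = 0.
    have : z^+2 = 0.
      have H2 : z^+2 = r^+2 - y^+2 by rewrite Hr; ring.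
      by rewrite H2 Ey sqrrN subrr.
    by move/eqP; rewrite sqrf_eq0 => /eqP.
  exists 0, 1; split; first by rewrite expr0n /= add0r expr1n.
  by rewrite qcj_rot Ey Ez; apply: quat_eq => /=; rewrite ?expr2; ring.
have rN0 : r != 0.
  apply: contraNneq Nry => r0'; rewrite r0' add0r.
  have : y^+2 + z^+2 = 0 by rewrite -Hr r0' expr0n.
  move/eqP; rewrite paddr_eq0 ?sqr_ge0 // sqrf_eq0 => /andP [/eqP -> _] //.
set P := r + y; set Q := - z; set N := P^+2 + Q^+2.
have N0 : 0 < N.
  rewrite /N; apply: ltr_wpDr; first exact: sqr_ge0.
  by rewrite lt_def sqr_ge0 andbT sqrf_eq0.
have hP : r * (P^+2 - Q^+2) = y * N.
  have E : r * (P^+2 - Q^+2) - y * N = (r + y) * (r^+2 - (y^+2 + z^+2)).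
    by rewrite /N /P /Q; ring.
  by apply/eqP; rewrite -subr_eq0 E Hr subrr mulr0.
have hQ : - (2 * P * Q * r) = z * N.
  have E : - (2 * P * Q * r) - z * N = z * (r^+2 - (y^+2 + z^+2)).
    by rewrite /N /P /Q; ring.
  by apply/eqP; rewrite -subr_eq0 E Hr subrr mulr0.
set n := Num.sqrt N.
have n2 : n^+2 = N by rewrite sqr_sqrtr // ltW.
have n0 : n != 0 by rewrite sqrtr_eq0 -ltNge.
exists (P / n), (Q / n); split.
  by rewrite !expr_div_n -mulrDl n2 /N divff // gt_eqF.
rewrite qcj_rot; apply: quat_eq => //=.
- by rewrite !expr_div_n -mulrDl n2 divff ?gt_eqF // mulr1.
- by rewrite !expr_div_n -mulrBl n2 mulrA hP -mulrA divff ?gt_eqF // mulr1.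
- have -> : 2 * (P / n) * (Q / n) * r = (2 * P * Q * r) / n^+2.
    by rewrite expr2 invfM; ring.
  by rewrite -mulNr hQ n2 -mulrA divff ?gt_eqF // mulr1.
Qed.
End Rot.
Section Inv.
Variable R : realType.
Local Notation mkQ := (@mkQ R).
Local Notation quat := (quat R).

Definition trp (u v : cmx R) : R :=
  u.1 0 0 * v.1 0 0 + u.1 0 1 * v.1 1 0 + u.1 1 0 * v.1 0 1 + u.1 1 1 * v.1 1 1
  - (u.2 0 0 * v.2 0 0 + u.2 0 1 * v.2 1 0 + u.2 1 0 * v.2 0 1 + u.2 1 1 * v.2 1 1).
Definition Phi (x : X4 R) : R := trp x.1.1.1 x.2 + trp x.1.1.2 x.1.2.

Lemma trp_mkQ (x y : quat) : trp (mkQ x) (mkQ y) = 2 * q0 (qmul x y).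
Proof. rewrite /trp /mkQ /= !mx2E; ring. Qed.

Lemma Phi_quad (a b c d : quat) :
  Phi (quad (mkQ a) (mkQ b) (mkQ c) (mkQ d)) = 2 * q0 (qmul a d) + 2 * q0 (qmul b c).
Proof. by rewrite /Phi /quad /= !trp_mkQ. Qed.

Lemma Phi_conj (x : X4 R) s : Defs.Hom x -> SU2 s -> Phi (conj4 s x) = Phi x.
Proof.
move=> /Hom_form [a [b [c [d [-> _]]]]] /SU2_form [Es Ns]; rewrite Es.
by rewrite conj4_quad !Phi_quad !qcj_mul // !q0_qcj Ns !mul1r.
Qed.

Lemma cont_sel1 : continuous (fun x : X4 R => x.1.1.1).
Proof.
move=> x; apply: (@continuous_comp _ _ _ (fun x : X4 R => x.1.1) fst); last exact: cont_fst.
apply: (@continuous_comp _ _ _ (fun x : X4 R => x.1) fst); last exact: cont_fst.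
exact: cont_fst.
Qed.
Lemma cont_sel2 : continuous (fun x : X4 R => x.1.1.2).
Proof.
move=> x; apply: (@continuous_comp _ _ _ (fun x : X4 R => x.1.1) snd); last exact: cont_snd.
apply: (@continuous_comp _ _ _ (fun x : X4 R => x.1) fst); last exact: cont_fst.
exact: cont_fst.
Qed.
Lemma cont_sel3 : continuous (fun x : X4 R => x.1.2).
Proof.
move=> x; apply: (@continuous_comp _ _ _ (fun x : X4 R => x.1) snd); last exact: cont_snd.
exact: cont_fst.
Qed.
Lemma cont_sel4 : continuous (fun x : X4 R => x.2).
Proof. exact: cont_snd. Qed.

Lemma cont_trp (T : topologicalType) (F G : T -> cmx R) :
  continuous F -> continuous G -> continuous (fun t => trp (F t) (G t)).
Proof.
move=> cF cG.
have cF1 : continuous (fun t => (F t).1).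
  by move=> t; apply: (@continuous_comp _ _ _ F fst); [exact: cF|exact: cont_fst].
have cF2 : continuous (fun t => (F t).2).
  by move=> t; apply: (@continuous_comp _ _ _ F snd); [exact: cF|exact: cont_snd].
have cG1 : continuous (fun t => (G t).1).
  by move=> t; apply: (@continuous_comp _ _ _ G fst); [exact: cG|exact: cont_fst].
have cG2 : continuous (fun t => (G t).2).
  by move=> t; apply: (@continuous_comp _ _ _ G snd); [exact: cG|exact: cont_snd].
rewrite /trp.
apply: cont_add; last apply: cont_opp.
  apply: cont_add; [apply: cont_add; [apply: cont_add|]|];
  apply: cont_mul; apply: cont_entry => //.
apply: cont_add; [apply: cont_add; [apply: cont_add|]|];
apply: cont_mul; apply: cont_entry => //.
Qed.

Lemma cont_Phi : continuous Phi.
Proof.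
rewrite /Phi; apply: cont_add; apply: cont_trp;
  [exact: cont_sel1|exact: cont_sel4|exact: cont_sel2|exact: cont_sel3].
Qed.

Lemma cont_val : continuous (fun p : HomT R => val p).
Proof.
have := @initial_continuous (HomT R) (X4 R) set_val.
by [].
Qed.

End Inv.
Section Main.
Variable R : realType.
Variables a0 a1 b0 b1 : R.
Hypothesis Ha : a0^+2 + a1^+2 = 1.
Hypothesis Hb : b0^+2 + b1^+2 = 1.
Local Notation mkQ := (@mkQ R).
Local Notation quat := (quat R).

Definition gq : quat := Qt a0 a1 0 0.
Definition hq : quat := Qt b0 b1 0 0.
Definition cc (t : R) := Num.sqrt (1 - @clamp R t).
Definition ss (t : R) := Num.sqrt (@clamp R t).
Definition kq (t : R) : quat := Qt 0 (cc t) (ss t) 0.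
Definition xq (t : R) : X4 R :=
  quad (mkQ gq) (mkQ hq) (mkQ (qcj (kq t) hq)) (mkQ (qcj (kq t) gq)).

Lemma cc2 t : cc t ^+ 2 = 1 - clamp t.
Proof. have [h h'] := clamp_in t; rewrite /cc sqr_sqrtr //; lra. Qed.
Lemma ss2 t : ss t ^+ 2 = clamp t.
Proof. have [h h'] := clamp_in t; rewrite /ss sqr_sqrtr //. Qed.

Lemma qnorm_kq t : qnorm (kq t) = 1.
Proof. rewrite /qnorm /= cc2 ss2; ring. Qed.

Lemma kq_sq t : qmul (kq t) (kq t) = qsc (-1).
Proof.
apply: quat_eq => /=; last by ring.
- by rewrite -[cc t * cc t]expr2 -[ss t * ss t]expr2 cc2 ss2; ring.
- ring.
- ring.
Qed.

Lemma qnorm_gq : qnorm gq = 1.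
Proof. by rewrite /qnorm /= -Ha; ring. Qed.
Lemma qnorm_hq : qnorm hq = 1.
Proof. by rewrite /qnorm /= -Hb; ring. Qed.

Lemma qcomm_gh : qcomm gq hq = qsc 1.
Proof. by rewrite /gq /hq qcomm_diag Ha Hb mulr1. Qed.
Lemma qcomm_hg : qcomm hq gq = qsc 1.
Proof. by rewrite /gq /hq qcomm_diag Ha Hb mulr1. Qed.

Lemma Hom_xq t : Defs.Hom (xq t).
Proof.
apply/Hom_quad; rewrite !qnorm_qcj ?qnorm_kq ?qnorm_gq ?qnorm_hq //; split => //.
by rewrite qcomm_qcj ?qnorm_kq // qcomm_hg qcj_1 ?qnorm_kq // qcomm_gh qmul1.
Qed.

Definition pt (t : R) : HomT R := mkHom (Hom_xq t).
Definition fM (t : R) : M R := piM (pt t).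

Lemma cont_mkQ (T : topologicalType) (F : T -> quat) :
  continuous (fun t => q0 (F t)) -> continuous (fun t => q1 (F t)) ->
  continuous (fun t => q2 (F t)) -> continuous (fun t => q3 (F t)) ->
  continuous (fun t => mkQ (F t)).
Proof.
move=> c0 c1 c2 c3; rewrite /mkQ; apply: cont_pair; apply: cont_mx2 => //;
  exact: cont_opp.
Qed.

Lemma cont_cc : continuous cc.
Proof. apply: cont_sqrt; apply: cont_add; [exact: cont_cst|apply: cont_opp; exact: cont_clamp]. Qed.
Lemma cont_ss : continuous ss.
Proof. apply: cont_sqrt; exact: cont_clamp. Qed.

Lemma cont_xq : continuous xq.
Proof.
rewrite /xq /quad.
have cq (x0 x1 : R) : continuous (fun t => mkQ (qcj (kq t) (Qt x0 x1 0 0))).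
  rewrite /kq; under eq_fun do rewrite qcj_pure.
  have e2 (f : R -> R) : continuous f -> continuous (fun t => f t ^+ 2).
    by move=> cf; rewrite /=; under eq_fun do rewrite expr2; exact: cont_mul.
  apply: cont_mkQ => /=.
  - apply: cont_mul; first exact: cont_cst.
    by apply: cont_add; apply: e2; [exact: cont_cc|exact: cont_ss].
  - apply: cont_mul; first exact: cont_cst.
    by apply: cont_add; [apply: e2; exact: cont_cc|apply: cont_opp; apply: e2; exact: cont_ss].
  - apply: cont_mul; last exact: cont_ss.
    by apply: cont_mul; [exact: cont_cst|exact: cont_cc].
  - exact: cont_cst.
apply: cont_pair; last exact: (cq a0 a1).
apply: cont_pair; last exact: (cq b0 b1).
by apply: cont_pair; exact: cst_continuous.
Qed.

Lemma cont_fM : continuous fM.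
Proof.
have cp : continuous pt.
  apply: continuous_comp_initial.
  exact: cont_xq.
have -> : fM = @piM R \o pt by [].
move=> t; apply: continuous_comp; first exact: cp.
exact: pi_continuous.
Qed.

Hypothesis HD : 0 < a1^+2 + b1^+2.

Definition Dab := a1^+2 + b1^+2.
Definition psi (x : X4 R) : R := (Phi x - 2 * (a0^+2 + b0^+2 - Dab)) / (4 * Dab).

Lemma q0_gq_cj (c s : R) (x0 x1 : R) :
  q0 (qmul (Qt x0 x1 0 0) (qcj (Qt 0 c s 0) (Qt x0 x1 0 0))) =
  x0^+2 * (c^+2 + s^+2) - x1^+2 * (c^+2 - s^+2).
Proof. rewrite qcj_pure /= ?expr2; ring. Qed.

Lemma psi_xq t : psi (xq t) = clamp t.
Proof.
rewrite /psi /xq Phi_quad /kq /gq /hq !q0_gq_cj cc2 ss2 /Dab.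
have D0 : 4 * (a1^+2 + b1^+2) != 0 by rewrite mulf_neq0 // ?gt_eqF.
have -> : a0^+2 = 1 - a1^+2 by rewrite -Ha; ring.
have -> : b0^+2 = 1 - b1^+2 by rewrite -Hb; ring.
by field; rewrite gt_eqF.
Qed.

Definition phiM (m : M R) : R := psi (val (repr m)).

Lemma psi_orbit (p q : HomT R) : piM p = piM q -> psi (val p) = psi (val q).
Proof.
move=> /piM_orbit [k [Hk ->]]; rewrite /psi Phi_conj //.
exact: HomT_Hom.
Qed.

Lemma phiM_pi (p : HomT R) : phiM (piM p) = psi (val p).
Proof. by apply: psi_orbit; rewrite /piM reprK. Qed.

Lemma phiM_fM t : phiM (fM t) = clamp t.
Proof. by rewrite /fM phiM_pi /= psi_xq. Qed.

Lemma cont_phiM : continuous phiM.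
Proof.
have -> : phiM = (fun p : HomT R => psi (val p)) \o repr by [].
apply: repr_comp_continuous.
  rewrite /psi => p; apply: cont_mul; last exact: cont_cst.
  apply: cont_add; last exact: cont_cst.
  move=> q; exact: (continuous_comp (@cont_val R q) (@cont_Phi R _)).
move=> p q /eqP E; apply/eqP; exact: psi_orbit.
Qed.

Lemma qcj_kq t (x0 x1 : R) :
  qcj (kq t) (Qt x0 x1 0 0) = Qt x0 (x1 * (1 - 2 * clamp t)) (2 * x1 * cc t * ss t) 0.
Proof.
rewrite /kq qcj_pure cc2 ss2; apply: quat_eq => //=; ring.
Qed.

Lemma clamp0 : clamp (0 : R) = 0.
Proof. by rewrite clamp_id ?lexx ?ler01. Qed.
Lemma clamp1 : clamp (1 : R) = 1.
Proof. by rewrite clamp_id ?lexx ?ler01. Qed.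

Lemma xq0 : xq 0 = quad (mkQ gq) (mkQ hq) (mkQ hq) (mkQ gq).
Proof.
have s0 : ss 0 = 0 by rewrite /ss clamp0 sqrtr0.
rewrite /xq /gq /hq !qcj_kq s0 clamp0.
by congr quad; congr mkQ; apply: quat_eq => /=; ring.
Qed.

Lemma xq1 : xq 1 = quad (mkQ gq) (mkQ hq) (mkQ (qconj hq)) (mkQ (qconj gq)).
Proof.
have c1 : cc 1 = 0 by rewrite /cc clamp1 subrr sqrtr0.
rewrite /xq /gq /hq !qcj_kq c1 clamp1.
by congr quad; congr mkQ; apply: quat_eq => /=; ring.
Qed.

Local Notation G := (mkQ gq).
Local Notation H := (mkQ hq).

Lemma fM_Iset t : Iset G H (fM t).
Proof.
exists (mkQ (kq t)); split.
- by apply/SU2_mkQ; exact: qnorm_kq.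
- by rewrite mkQ_mul kq_sq mkQ_mone.
- by rewrite !cconj_mkQ; exists (pt t).
Qed.

Lemma fM0 : is_class (fM 0) (quad G H H G) /\ P1 (fM 0).
Proof.
have C : is_class (fM 0) (quad G H H G) by exists (pt 0); split => //=; rewrite xq0.
split => //; exists G, H; split => //.
- by apply/SU2_mkQ; exact: qnorm_gq.
- by apply/SU2_mkQ; exact: qnorm_hq.
- by rewrite ccomm_mkQ qcomm_gh mkQ_one.
Qed.

Lemma fM1 : is_class (fM 1) (quad G H (cinv H) (cinv G)) /\ P2 (fM 1).
Proof.
have C : is_class (fM 1) (quad G H (cinv H) (cinv G)).
  by exists (pt 1); split => //=; rewrite xq1 !cinv_mkQ.
split => //; exists G, H; split => //.
- by apply/SU2_mkQ; exact: qnorm_gq.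
- by apply/SU2_mkQ; exact: qnorm_hq.
- by rewrite ccomm_mkQ qcomm_gh mkQ_one.
Qed.

Lemma quad_inj (x1 x2 x3 x4 y1 y2 y3 y4 : quat) :
  quad (mkQ x1) (mkQ x2) (mkQ x3) (mkQ x4) = quad (mkQ y1) (mkQ y2) (mkQ y3) (mkQ y4) ->
  [/\ x1 = y1, x2 = y2, x3 = y3 & x4 = y4].
Proof.
move=> E; split; apply: mkQ_inj.
- exact: (f_equal (fun x : X4 R => x.1.1.1) E).
- exact: (f_equal (fun x : X4 R => x.1.1.2) E).
- exact: (f_equal (fun x : X4 R => x.1.2) E).
- exact: (f_equal (fun x : X4 R => x.2) E).
Qed.

Lemma fM_notP (t : R) : t \in `]0, 1[ -> ~ (@P1 R `|` @P2 R) (fM t).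
Proof.
rewrite in_itv /= => /andP [t0 t1].
have ct : clamp t = t by rewrite clamp_id // ltW.
have key : forall p : HomT R, fM t = piM p ->
  exists k : quat, qnorm k = 1 /\ exists a b c d : quat,
   val p = quad (mkQ a) (mkQ b) (mkQ c) (mkQ d) /\
   [/\ gq = qcj k a, hq = qcj k b, qcj (kq t) hq = qcj k c & qcj (kq t) gq = qcj k d].
  move=> p Em; have [k [Hk Ep]] := piM_orbit Em.
  have [Ek Nk] := SU2_form Hk.
  have [a [b [c [d [Ex _]]]]] := Hom_form (HomT_Hom p).
  exists (ofC k); split => //; exists a, b, c, d; split => //.
  move: Ep; rewrite Ex [in conj4 k _]Ek conj4_quad /= /xq.
  by move=> /quad_inj [E1 E2 E3 E4]; split.
have cs2 : (cc t * ss t)^+2 = (1 - t) * t by rewrite exprMn cc2 ss2 ct.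
have cs0 : (cc t * ss t)^+2 != 0.
  by rewrite cs2 mulf_neq0 // gt_eqF // subr_gt0.
have cc0 : cc t ^+2 != 0 by rewrite cc2 ct gt_eqF // subr_gt0.
case=> [[a [b [Sa Sb Cab [p [Ep Em]]]]] | [a [b [Sa Sb Cab [p [Ep Em]]]]]].
  have [k [Nk [a' [b' [c' [d' [Ex [E1 E2 E3 E4]]]]]]]] := key p Em.
  move: Ex; rewrite Ep => /(f_equal (fun x : X4 R => (x.1.1.1, x.1.1.2, x.1.2, x.2))) /=.
  move=> [Ea Eb Ec Ed].
  have Hg : qcj (kq t) gq = gq.
    rewrite E4 E1; congr qcj; apply: mkQ_inj; by rewrite -Ed -Ea.
  have Hh : qcj (kq t) hq = hq.
    rewrite E3 E2; congr qcj; apply: mkQ_inj; by rewrite -Ec -Eb.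
  move: Hg Hh; rewrite /gq /hq !qcj_kq => /(f_equal (@q2 R)) /= Hg /(f_equal (@q2 R)) /= Hh.
  have : (a1^+2 + b1^+2) * (cc t * ss t)^+2 = 0.
    have -> : (a1^+2 + b1^+2) * (cc t * ss t)^+2 =
      ((2 * a1 * cc t * ss t)^+2 + (2 * b1 * cc t * ss t)^+2) / 4.
      by field.
    by rewrite Hg Hh expr0n /= addr0 mul0r.
  by move/eqP; rewrite mulf_eq0 (negbTE cs0) orbF gt_eqF.
have [k [Nk [a' [b' [c' [d' [Ex [E1 E2 E3 E4]]]]]]]] := key p Em.
have Ea : a = mkQ a' by have := f_equal (fun x : X4 R => x.1.1.1) (etrans (esym Ep) Ex).
have Eb : b = mkQ b' by have := f_equal (fun x : X4 R => x.1.1.2) (etrans (esym Ep) Ex).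
move: Ex; rewrite Ep Ea Eb !cinv_mkQ => /quad_inj [_ _ Ec Ed].
have Hg : qcj (kq t) gq = qconj gq by rewrite E4 E1 qconj_qcj -Ed.
have Hh : qcj (kq t) hq = qconj hq by rewrite E3 E2 qconj_qcj -Ec.
move: Hg Hh; rewrite /gq /hq !qcj_kq ct => /(f_equal (@q1 R)) /= Hg /(f_equal (@q1 R)) /= Hh.
have : (a1^+2 + b1^+2) * (1 - t)^+2 = 0.
  have -> : (a1^+2 + b1^+2) * (1 - t)^+2 =
    ((a1 * (1 - 2 * t) + a1)^+2 + (b1 * (1 - 2 * t) + b1)^+2) / 4.
    by field.
  by rewrite Hg Hh !addNr expr0n /= addr0 mul0r.
move/eqP; rewrite mulf_eq0 (gt_eqF HD) /= sqrf_eq0 subr_eq0 => /eqP t1'.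
by move: t1; rewrite -t1' ltxx.
Qed.

Lemma Iset_fM (m : M R) : Iset G H m -> exists t : R, (0 <= t /\ t <= 1) /\ m = fM t.
Proof.
case=> k [Hk Kk [p [Ep ->]]].
have [Ek Nk] := SU2_form Hk.
have Kq : qmul (ofC k) (ofC k) = qsc (-1).
  by apply: mkQ_inj; rewrite -mkQ_mul -mkQ_mone -Ek.
move: Ep; rewrite Ek !cconj_mkQ.
move: Nk Kq; case: (ofC k) => k0 c y z; rewrite /qnorm /= => Nk Kq Ep.
have Kq0 := f_equal (@q0 R) Kq; rewrite /= in Kq0.
have k00 : k0 = 0.
  have : k0 ^+ 2 = 0.
    have -> : k0^+2 = ((k0 ^+ 2 + c ^+ 2 + y ^+ 2 + z ^+ 2) + (k0 * k0 - c * c - y * y - z * z)) / 2.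
      by field.
    by rewrite Nk Kq0 subrr mul0r.
  by move/eqP; rewrite sqrf_eq0 => /eqP.
subst k0.
set t := y^+2 + z^+2.
have c2 : c^+2 = 1 - t by rewrite /t -Nk; ring.
have t0 : 0 <= t by rewrite /t addr_ge0 ?sqr_ge0.
have t1 : t <= 1 by rewrite -subr_ge0 -c2 sqr_ge0.
have ct : clamp t = t by rewrite clamp_id.
exists t; split => //.
set e : R := if 0 <= c then 1 else -1.
have e2 : e ^+ 2 = 1 by rewrite /e; case: ifP => _; rewrite ?sqrrN expr1n.
have ec : e * c = `|c|.
  by rewrite /e; case: ifP => h; [rewrite mul1r ger0_norm | rewrite mulN1r ltr0_norm // ltNge h].
have cct : cc t = `|c| by rewrite /cc ct -c2 sqrtr_sqr.
set r := ss t.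
have r0 : 0 <= r by rewrite /r /ss sqrtr_ge0.
have r2 : r ^+ 2 = (e * y) ^+ 2 + (e * z) ^+ 2.
  by rewrite /r ss2 ct !exprMn e2 !mul1r.
have [p' [q' [Npq Rot]]] := rot_exists `|c| r0 r2.
set s := Qt p' q' 0 0.
have Ns : qnorm s = 1 by rewrite /qnorm /= -Npq; ring.
have Hs : SU2 (mkQ s) by apply/SU2_mkQ.
have kqt : kq t = Qt 0 `|c| r 0 by rewrite /kq cct.
have kk : qcj s (kq t) = qscale e (Qt 0 c y z).
  by rewrite kqt Rot; apply: quat_eq => //=; rewrite ?mulr0 // ec.
have sg (x0 x1 : R) : qcj s (Qt x0 x1 0 0) = Qt x0 x1 0 0.
  by rewrite qcj_diag Npq qscale1.
have Econj : conj4 (mkQ s) (xq t) = val p.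
  have -> : val p = sval p by [].
  rewrite Ep /xq conj4_quad !(qcj_shift _ Ns kk) /gq /hq !sg !qcj_scale e2 !qscale1.
  by [].
apply/piM_eq; rewrite -Econj orbit_conj4 //; exact: Hom_xq.
Qed.

Lemma main_reduced : exists f : R -> M R,
  [/\ homeo_from_unit f (Iset G H),
      is_class (f 0) (quad G H H G) /\ P1 (f 0),
      is_class (f 1) (quad G H (cinv H) (cinv G)) /\ P2 (f 1) &
      forall t, t \in `]0, 1[ -> ~ (@P1 R `|` @P2 R) (f t)].
Proof.
exists fM; split; [|exact: fM0|exact: fM1|exact: fM_notP].
have img : fM @` `[0, 1] = Iset G H.
  rewrite eqEsubset; split => m.
    by case=> t _ <-; exact: fM_Iset.
  move=> /Iset_fM [t [[t0 t1] ->]]; exists t; last by [].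
  by rewrite /= in_itv /= t0 t1.
split => //.
- by apply: continuous_subspaceT; exact: cont_fM.
- move=> x y Hx Hy E; move: Hx Hy; rewrite !in_itv /= => /andP [x0 x1] /andP [y0 y1].
  by rewrite -(clamp_id x0 x1) -(clamp_id y0 y1) -!phiM_fM E.
- move=> U oU; exists (phiM @^-1` U); split.
    by move/continuousP : cont_phiM; apply.
  rewrite -img eqEsubset; split => m.
    case=> t [Ut It] <-; split; last by exists t.
    move: It; rewrite /= in_itv /= => /andP [t0 t1].
    by rewrite /= phiM_fM clamp_id.
  case=> /= Um [t It Et]; exists t => //; split => //.
  move: It; rewrite /= in_itv /= => /andP [t0 t1].
  by rewrite -Et phiM_fM clamp_id in Um.
Qed.

End Main.
Section Reduce.
Variable R : realType.
Local Notation quat := (quat R).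
Ltac qring := apply: quat_eq; rewrite /= ?expr2; ring.

Lemma qcj_gen (s0 s2 s3 c0 c1 : R) :
  qcj (Qt s0 0 s2 s3) (Qt c0 c1 0 0) =
  Qt (c0 * (s0^+2 + s2^+2 + s3^+2)) (c1 * (s0^+2 - s2^+2 - s3^+2))
     (c1 * (- (2 * s0 * s3))) (c1 * (2 * s0 * s2)).
Proof. rewrite /qcj; qring. Qed.

Lemma reduce1 (x y : quat) : qnorm x = 1 -> qnorm y = 1 -> qmul x y = qmul y x ->
  0 < q1 x ^+ 2 + q2 x ^+ 2 + q3 x ^+ 2 ->
  exists s : quat, exists a0 a1 b0 b1 : R,
    [/\ qnorm s = 1, a0^+2 + a1^+2 = 1, b0^+2 + b1^+2 = 1, a1 != 0 &
        x = qcj s (Qt a0 a1 0 0) /\ y = qcj s (Qt b0 b1 0 0)].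
Proof.
case: x => x0 v1 v2 v3; case: y => y0 w1 w2 w3; rewrite /qnorm /=.
move=> Nx Ny C nv0.
have C1 := f_equal (@q1 R) C; have C2 := f_equal (@q2 R) C; have C3 := f_equal (@q3 R) C.
rewrite /= in C1 C2 C3.
have X1 : v2 * w3 - v3 * w2 = 0.
  have -> : v2 * w3 - v3 * w2 = ((y0 * v1 + w1 * x0 - w2 * v3 + w3 * v2) - (x0 * w1 + v1 * y0 - v2 * w3 + v3 * w2)) / 2.
    by field.
  by rewrite C1 subrr mul0r.
have X2 : v3 * w1 - v1 * w3 = 0.
  have -> : v3 * w1 - v1 * w3 = ((y0 * v2 + w2 * x0 + w1 * v3 - w3 * v1) - (x0 * w2 + v2 * y0 + v1 * w3 - v3 * w1)) / 2.
    by field.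
  by rewrite C2 subrr mul0r.
have X3 : v1 * w2 - v2 * w1 = 0.
  have -> : v1 * w2 - v2 * w1 = ((y0 * v3 + w3 * x0 + w2 * v1 - w1 * v2) - (x0 * w3 + v3 * y0 + v2 * w1 - v1 * w2)) / 2.
    by field.
  by rewrite C3 subrr mul0r.
set nv := v1 ^+ 2 + v2 ^+ 2 + v3 ^+ 2.
set d := v1 * w1 + v2 * w2 + v3 * w3.
have L1 : nv * w1 = d * v1.
  apply/eqP; rewrite -subr_eq0; apply/eqP.
  have -> : nv * w1 - d * v1 = - v2 * (v1 * w2 - v2 * w1) + v3 * (v3 * w1 - v1 * w3).
    by rewrite /nv /d; ring.
  by rewrite ?X1 ?X2 ?X3 !mulr0 addr0.
have L2 : nv * w2 = d * v2.
  apply/eqP; rewrite -subr_eq0; apply/eqP.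
  have -> : nv * w2 - d * v2 = v1 * (v1 * w2 - v2 * w1) - v3 * (v2 * w3 - v3 * w2).
    by rewrite /nv /d; ring.
  by rewrite ?X1 ?X2 ?X3 !mulr0 subr0.
have L3 : nv * w3 = d * v3.
  apply/eqP; rewrite -subr_eq0; apply/eqP.
  have -> : nv * w3 - d * v3 = - v1 * (v3 * w1 - v1 * w3) + v2 * (v2 * w3 - v3 * w2).
    by rewrite /nv /d; ring.
  by rewrite ?X1 ?X2 ?X3 !mulr0 addr0.
have Lag : d ^+ 2 = nv * (w1 ^+ 2 + w2 ^+ 2 + w3 ^+ 2).
  apply/eqP; rewrite -subr_eq0; apply/eqP.
  have -> : d ^+ 2 - nv * (w1 ^+ 2 + w2 ^+ 2 + w3 ^+ 2) =
    - ((v2 * w3 - v3 * w2) ^+ 2 + (v3 * w1 - v1 * w3) ^+ 2 + (v1 * w2 - v2 * w1) ^+ 2).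
    by rewrite /nv /d; ring.
  by rewrite X1 X2 X3 expr0n /= !addr0 oppr0.
set m := Num.sqrt nv.
have m2 : m ^+ 2 = nv by rewrite sqr_sqrtr // ltW.
have m0 : 0 < m by rewrite sqrtr_gt0.
have mN0 : m != 0 by rewrite gt_eqF.
have nvN0 : nv != 0 by rewrite gt_eqF.
have Hw1 : w1 = (d / m) * (v1 / m).
  by apply: (mulfI nvN0); rewrite L1 -m2; field.
have Hw2 : w2 = (d / m) * (v2 / m).
  by apply: (mulfI nvN0); rewrite L2 -m2; field.
have Hw3 : w3 = (d / m) * (v3 / m).
  by apply: (mulfI nvN0); rewrite L3 -m2; field.
have Na : x0 ^+ 2 + m ^+ 2 = 1 by rewrite m2 -Nx /nv; ring.
have Nb : y0 ^+ 2 + (d / m) ^+ 2 = 1.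
  by rewrite expr_div_n Lag m2 -Ny mulrC mulKf //; ring.
set P := m + v1.
have [P0|PN0] := eqVneq P 0.
  have ev1 : v1 = - m by apply/eqP; rewrite -subr_eq0 opprK addrC -/P P0.
  have v23 : v2 ^+ 2 + v3 ^+ 2 = 0.
    have -> : v2 ^+ 2 + v3 ^+ 2 = m ^+ 2 - v1 ^+ 2 by rewrite m2 /nv; ring.
    by rewrite ev1 sqrrN subrr.
  move/eqP: v23; rewrite paddr_eq0 ?sqr_ge0 // !sqrf_eq0 => /andP [/eqP ev2 /eqP ev3].
  exists (Qt 0 0 1 0), x0, m, y0, (d / m); split => //.
    by rewrite /qnorm /=; ring.
  split; rewrite qcj_gen; apply: quat_eq => /=; rewrite ?ev1 ?ev2 ?ev3; try ring.
  - by rewrite Hw1 ev1; field.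
  - by rewrite Hw2 ev2; field.
  - by rewrite Hw3 ev3; field.
set N := P ^+ 2 + v3 ^+ 2 + v2 ^+ 2.
have hN : N = 2 * m * P.
  apply/eqP; rewrite -subr_eq0; apply/eqP.
  have -> : N - 2 * m * P = nv - m ^+ 2 by rewrite /N /P /nv; ring.
  by rewrite m2 subrr.
have hQ : P ^+ 2 - v3 ^+ 2 - v2 ^+ 2 = 2 * v1 * P.
  apply/eqP; rewrite -subr_eq0; apply/eqP.
  have -> : P ^+ 2 - v3 ^+ 2 - v2 ^+ 2 - 2 * v1 * P = m ^+ 2 - nv by rewrite /P /nv; ring.
  by rewrite m2 subrr.
have N0 : 0 < N.
  rewrite /N -addrA; apply: ltr_wpDr; first by rewrite addr_ge0 ?sqr_ge0.
  by rewrite lt_def sqr_ge0 andbT sqrf_eq0.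
set n := Num.sqrt N.
have n2 : n ^+ 2 = N by rewrite sqr_sqrtr // ltW.
have nN0 : n != 0 by rewrite sqrtr_eq0 -ltNge.
have S1 : (P / n) ^+ 2 + (v3 / n) ^+ 2 + (- v2 / n) ^+ 2 = 1.
  have -> : (P / n) ^+ 2 + (v3 / n) ^+ 2 + (- v2 / n) ^+ 2 = N / n ^+ 2 by rewrite /N; field.
  by rewrite n2 divff // gt_eqF.
have S2 : (P / n) ^+ 2 - (v3 / n) ^+ 2 - (- v2 / n) ^+ 2 = v1 / m.
  have -> : (P / n) ^+ 2 - (v3 / n) ^+ 2 - (- v2 / n) ^+ 2 = (P ^+ 2 - v3 ^+ 2 - v2 ^+ 2) / n ^+ 2.
    by field.
  by rewrite n2 hN hQ; field; rewrite mN0 PN0.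
have S3 : - (2 * (P / n) * (- v2 / n)) = v2 / m.
  have -> : - (2 * (P / n) * (- v2 / n)) = (2 * P * v2) / n ^+ 2 by field.
  by rewrite n2 hN; field; rewrite mN0 PN0.
have S4 : 2 * (P / n) * (v3 / n) = v3 / m.
  have -> : 2 * (P / n) * (v3 / n) = (2 * P * v3) / n ^+ 2 by field.
  by rewrite n2 hN; field; rewrite mN0 PN0.
exists (Qt (P / n) 0 (v3 / n) (- v2 / n)), x0, m, y0, (d / m); split => //.
  by rewrite /qnorm /= -S1; ring.
split; rewrite qcj_gen S1 S2 S3 S4; apply: quat_eq => /=; rewrite ?mulr1 //.
- by field.
- by field.
- by field.
Qed.

Lemma reduce (x y : quat) : qnorm x = 1 -> qnorm y = 1 -> qmul x y = qmul y x ->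
  0 < (q1 x ^+ 2 + q2 x ^+ 2 + q3 x ^+ 2) + (q1 y ^+ 2 + q2 y ^+ 2 + q3 y ^+ 2) ->
  exists s : quat, exists a0 a1 b0 b1 : R,
    [/\ qnorm s = 1, a0^+2 + a1^+2 = 1, b0^+2 + b1^+2 = 1, 0 < a1 ^+ 2 + b1 ^+ 2 &
        x = qcj s (Qt a0 a1 0 0) /\ y = qcj s (Qt b0 b1 0 0)].
Proof.
move=> Nx Ny C pos.
have [hx|hx] := ltP 0 (q1 x ^+ 2 + q2 x ^+ 2 + q3 x ^+ 2).
  have [s [a0 [a1 [b0 [b1 [Ns Na Nb a1N0 E]]]]]] := reduce1 Nx Ny C hx.
  exists s, a0, a1, b0, b1; split => //.
  by apply: ltr_pwDl; [rewrite lt_def sqr_ge0 sqrf_eq0 a1N0 | exact: sqr_ge0].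
have hy : 0 < q1 y ^+ 2 + q2 y ^+ 2 + q3 y ^+ 2.
  have hx0 : 0 <= q1 x ^+ 2 + q2 x ^+ 2 + q3 x ^+ 2 by rewrite !addr_ge0 ?sqr_ge0.
  have E0 : q1 x ^+ 2 + q2 x ^+ 2 + q3 x ^+ 2 = 0 by apply/eqP; rewrite eq_le hx hx0.
  by move: pos; rewrite E0 add0r.
have [s [b0 [b1 [a0 [a1 [Ns Nb Na b1N0 [Ey Ex]]]]]]] := reduce1 Ny Nx (esym C) hy.
exists s, a0, a1, b0, b1; split => //.
by apply: ltr_pwDr; [rewrite lt_def sqr_ge0 sqrf_eq0 b1N0 | exact: sqr_ge0].
Qed.

End Reduce.
Section Transfer.
Variable R : realType.
Local Notation mkQ := (@mkQ R).
Local Notation quat := (quat R).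

Lemma qcj1 (x : quat) : qcj (qsc 1) x = x.
Proof. by rewrite /qcj qmul1l; apply: quat_eq => /=; ring. Qed.

Lemma qcomm_commute (c d : quat) : qnorm c = 1 -> qnorm d = 1 -> qmul c d = qmul d c ->
  qcomm c d = qsc 1.
Proof.
move=> Nc Nd C; rewrite /qcomm C -(qmulA d c (qconj c)) qmul_conjr Nc qmul1.
by rewrite qmul_conjr Nd.
Qed.

Lemma Hom4 (a b c d : quat) : qnorm a = 1 -> qnorm b = 1 -> qnorm c = 1 -> qnorm d = 1 ->
  qmul a b = qmul b a -> qmul c d = qmul d c ->
  Defs.Hom (quad (mkQ a) (mkQ b) (mkQ c) (mkQ d)).
Proof.
move=> Na Nb Nc Nd C1 C2; apply/Hom_quad; split => //.
by rewrite !qcomm_commute // qmul1.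
Qed.

Lemma transfer_quad (m : M R) (s a b c d : quat) : qnorm s = 1 ->
  Defs.Hom (quad (mkQ a) (mkQ b) (mkQ c) (mkQ d)) ->
  is_class m (quad (mkQ (qcj s a)) (mkQ (qcj s b)) (mkQ (qcj s c)) (mkQ (qcj s d))) <->
  is_class m (quad (mkQ a) (mkQ b) (mkQ c) (mkQ d)).
Proof.
move=> Ns Hx; rewrite -conj4_quad; apply: is_class_conj => //.
exact/SU2_mkQ.
Qed.

Lemma qcj_back (s k : quat) : qnorm s = 1 -> qcj s (qcj (qconj s) k) = k.
Proof. by move=> Ns; rewrite qcj_comp qmul_conjr Ns qcj1. Qed.

Lemma Iset_transfer (s a b : quat) : qnorm s = 1 -> qnorm a = 1 -> qnorm b = 1 ->
  qmul a b = qmul b a ->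
  Iset (mkQ (qcj s a)) (mkQ (qcj s b)) = Iset (mkQ a) (mkQ b).
Proof.
move=> Ns Na Nb Cab.
have Hk4 (k : quat) : qnorm k = 1 ->
    Defs.Hom (quad (mkQ a) (mkQ b) (mkQ (qcj k b)) (mkQ (qcj k a))).
  move=> Nk; apply: Hom4; rewrite ?qnorm_qcj //.
  by rewrite !qcj_mul // Cab.
rewrite eqEsubset; split => m [k [Hk Kk Cm]].
  have [Ek Nk] := SU2_form Hk.
  set k' := qcj (qconj s) (ofC k).
  have Nk' : qnorm k' = 1 by rewrite qnorm_qcj // qnorm_conj.
  have Kq : qmul (ofC k) (ofC k) = qsc (-1).
    by apply: mkQ_inj; rewrite -mkQ_mul -mkQ_mone -Ek.
  exists (mkQ k'); split.
  - exact/SU2_mkQ.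
  - rewrite mkQ_mul /k' qcj_mul ?qnorm_conj // Kq qcj_sc qnorm_conj Ns qscale1.
    by rewrite mkQ_mone.
  - move: Cm; rewrite Ek !cconj_mkQ.
    rewrite -(qcj_back (ofC k) Ns) -/k' -!(qcj_shift _ Ns (erefl (qcj s k'))).
    by move/(transfer_quad _ Ns (Hk4 _ Nk')).
have [Ek Nk] := SU2_form Hk.
set k' := ofC k.
have Kq : qmul k' k' = qsc (-1).
  by apply: mkQ_inj; rewrite -mkQ_mul -mkQ_mone -Ek.
exists (mkQ (qcj s k')); split.
- by apply/SU2_mkQ; rewrite qnorm_qcj.
- by rewrite mkQ_mul qcj_mul // Kq qcj_sc Ns qscale1 mkQ_mone.
- rewrite !cconj_mkQ -!(qcj_shift _ Ns (erefl (qcj s k'))).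
  apply/(transfer_quad _ Ns (Hk4 _ Nk)).
  by rewrite Ek !cconj_mkQ in Cm.
Qed.

Lemma central_conj (k g : cmx R) : (g = cone R \/ g = cmone R) -> SU2 k -> cconj k g = g.
Proof.
move=> Hg /SU2_form [Ek Nk]; rewrite Ek.
by case: Hg => ->; rewrite ?mkQ_one ?mkQ_mone cconj_mkQ qcj_sc Nk qscale1.
Qed.

Lemma central_Iset (g h : cmx R) : (g = cone R \/ g = cmone R) -> (h = cone R \/ h = cmone R) ->
  Iset g h = [set m | is_class m (quad g h h g)].
Proof.
move=> Hg Hh; rewrite eqEsubset; split => m.
  by case=> k [Hk _ Cm]; rewrite /= -{2}(central_conj Hh Hk) -{2}(central_conj Hg Hk).
move=> /= Cm; exists (mkQ (Qt 0 1 0 0)); split.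
- by apply/SU2_mkQ; rewrite /qnorm /=; ring.
- by rewrite mkQ_mul mkQ_mone; congr mkQ; apply: quat_eq => /=; ring.
- by rewrite !central_conj //; apply/SU2_mkQ; rewrite /qnorm /=; ring.
Qed.

Lemma vec0_central (x : quat) : qnorm x = 1 ->
  q1 x ^+ 2 + q2 x ^+ 2 + q3 x ^+ 2 = 0 -> mkQ x = cone R \/ mkQ x = cmone R.
Proof.
case: x => x0 x1 x2 x3; rewrite /qnorm /= => N /eqP.
rewrite !paddr_eq0 ?addr_ge0 ?sqr_ge0 // !sqrf_eq0 => /andP [/andP [/eqP e1 /eqP e2] /eqP e3].
have : x0 ^+ 2 == 1 by rewrite -N e1 e2 e3 expr0n /= !addr0.
rewrite sqrf_eq1 => /orP [/eqP e0|/eqP e0].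
  by left; rewrite mkQ_one e0 e1 e2 e3.
by right; rewrite mkQ_mone e0 e1 e2 e3.
Qed.

End Transfer.

Theorem mainTheorem14 (R : realType) (g h : cmx R) :
  SU2 g -> SU2 h -> cmul g h = cmul h g ->
  (~ ((g = @cone R \/ g = @cmone R) /\ (h = @cone R \/ h = @cmone R)) ->
     exists f : R -> M R,
       [/\ homeo_from_unit f (Iset g h),
           is_class (f 0) (quad g h h g) /\ P1 (f 0),
           is_class (f 1) (quad g h (cinv h) (cinv g)) /\ P2 (f 1) &
           forall t, t \in `]0, 1[ -> ~ (@P1 R `|` @P2 R) (f t)])
  /\
  ((g = @cone R \/ g = @cmone R) -> (h = @cone R \/ h = @cmone R) ->
     Iset g h = [set m | is_class m (quad g h h g)]).
Proof.
move=> Hg Hh Cgh; split; last exact: central_Iset.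
move=> NC.
have [Eg Ng] := SU2_form Hg; have [Eh Nh] := SU2_form Hh.
have C : qmul (ofC g) (ofC h) = qmul (ofC h) (ofC g).
  by apply: mkQ_inj; rewrite -!mkQ_mul -Eg -Eh.
have pos : 0 < (q1 (ofC g) ^+ 2 + q2 (ofC g) ^+ 2 + q3 (ofC g) ^+ 2) +
               (q1 (ofC h) ^+ 2 + q2 (ofC h) ^+ 2 + q3 (ofC h) ^+ 2).
  rewrite lt_def !addr_ge0 ?sqr_ge0 // andbT.
  apply/negP => /eqP E0; apply: NC.
  move/eqP: E0; rewrite paddr_eq0 ?addr_ge0 ?sqr_ge0 // => /andP [/eqP E1 /eqP E2].
  by split; [rewrite Eg; exact: vec0_central | rewrite Eh; exact: vec0_central].
have [s [a0 [a1 [b0 [b1 [Ns Na Nb HD [Ex Ey]]]]]]] := reduce Ng Nh C pos.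
have [f [Hf [F0a F0b] [F1a F1b] Fn]] := main_reduced Na Nb HD.
have Ga : qnorm (gq a0 a1) = 1 by exact: qnorm_gq.
have Hb' : qnorm (hq b0 b1) = 1 by exact: qnorm_hq.
have Cgq : qmul (gq a0 a1) (hq b0 b1) = qmul (hq b0 b1) (gq a0 a1).
  by rewrite /gq /hq; apply: quat_eq => /=; ring.
have Eg' : g = mkQ (qcj s (gq a0 a1)) by rewrite Eg Ex.
have Eh' : h = mkQ (qcj s (hq b0 b1)) by rewrite Eh Ey.
exists f; rewrite Eg' Eh' Iset_transfer //; split => //.
- split => //; apply/(transfer_quad _ Ns) => //.
  by apply: Hom4.
- split => //; rewrite !cinv_mkQ !qconj_qcj; apply/(transfer_quad _ Ns).
    by apply: Hom4; rewrite ?qnorm_conj // -!qconj_mul Cgq.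
  by rewrite -!cinv_mkQ.
Qed.
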